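(* Let $w>1$ be a fixed-precision binary number represented by $n$ bits, of which the first $m$ correspond to its integer part, and let $b\geq \max\{2m,4\}$. Consider the following algorithm (SQRT), in which every iterate is computed exactly in fixed precision arithmetic and then truncated to $b$ bits after the decimal point before being passed to the next step: if $w=1$ return $1$; otherwise set $\hat{x}_0 = 2^{-p}$, where $p\in\mathbb{N}$ is such that $2^p > w \geq 2^{p-1}$, set $s=\lceil \log_2 b\rceil$, and for $i=1,\dots,s$ compute $x_i = -w\hat{x}_{i-1}^2 + 2\hat{x}_{i-1}$ and let $\hat{x}_i$ be $x_i$ truncated (so $\hat{x}_s\approx 1/w$); then set $\hat{y}_0 = 2^{\lfloor (q-1)/2\rfloor}$, where $q\in\mathbb{N}$ is such that $2^{1-q} > \hat{x}_s \geq 2^{-q}$, and for $j=1,\dots,s$ compute $y_j = \frac{1}{2}(3\hat{y}_{j-1} - \hat{x}_s\hat{y}_{j-1}^3)$ and let $\hat{y}_j$ be $y_j$ truncated; return $\hat{y}_s$. Then the returned value $\hat{y}_s$ approximates $\sqrt{w}$ with error \begin{equation*} |\hat{y}_{s}-\sqrt{w}| \leq \left( \frac{3}{4} \right)^{b-2m} \left( 2+ b + \log_2 b \right). \end{equation*}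
   Context: Numbers are held in fixed precision: an $n$-bit register holding $w=\sum_{j=m-n}^{m-1} w^{(j)}2^j$, with $m$ bits for the integer part and $n-m$ bits for the fractional part. The first stage is Newton's iteration applied to $f_1(x)=\frac{1}{x}-w$ (approximating $1/w$), and the second stage is Newton's iteration applied to $f_2(y)=\frac{1}{y^2}-\hat{x}_s$ (approximating $1/\sqrt{\hat{x}_s}\approx\sqrt{w}$); each step uses only addition and multiplication. *)

(* Defs.v *)
From Stdlib Require Import Reals Lra Lia ZArith List.
Open Scope R_scope.

(* w is an n-bit fixed-precision binary number with m integer bits:
   w = sum_{j = m-n}^{m-1} w^(j) 2^j with bits w^(j) in {0,1}.
   Bit number k (k = 0..n-1) below has weight 2^(m-n+k). *)
Definition fixed_point (n m : nat) (w : R) : Prop :=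
  exists bits : nat -> bool,
    w = fold_right Rplus 0
          (map (fun k => if bits k
                         then powerRZ 2 (Z.of_nat m - Z.of_nat n + Z.of_nat k)
                         else 0) (seq 0 n)).

Definition trunc (b : nat) (x : R) : R := IZR (Int_part (x * 2 ^ b)) / 2 ^ b.

(* First stage: Newton for 1/x - w, truncated iterates hat x_i. *)
Fixpoint xhat (b : nat) (w : R) (p : nat) (i : nat) : R :=
  match i with
  | O => / 2 ^ p
  | S i' => let x := xhat b w p i' in trunc b (- w * x ^ 2 + 2 * x)
  end.

(* Second stage: Newton for 1/y^2 - xs, truncated iterates hat y_j. *)
Fixpoint yhat (b : nat) (xs y0 : R) (j : nat) : R :=
  match j with
  | O => y0
  | S j' => let y := yhat b xs y0 j' in trunc b (/ 2 * (3 * y - xs * y ^ 3))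
  end.

(* Main.v *)
Require Import Defs.
From Stdlib Require Import Reals ZArith Lra Lia Psatz List.
Open Scope R_scope.

Lemma pow_le1 x n : 0 <= x <= 1 -> x ^ n <= 1.
Proof. intros [H1 H2]. induction n; simpl. lra.
  assert (0 <= x ^ n) by (apply pow_le; lra). nra. Qed.

Lemma pow_decr x n k : 0 <= x <= 1 -> (n <= k)%nat -> x ^ k <= x ^ n.
Proof. intros H Hk. replace k with (n + (k - n))%nat by lia. rewrite pow_add.
  assert (0 <= x ^ n) by (apply pow_le; lra).
  pose proof (pow_le1 x (k - n) H). assert (0 <= x^(k-n)) by (apply pow_le; lra). nra. Qed.

Lemma trunc_spec b z : z - / 2 ^ b < trunc b z <= z.
Proof.
  unfold trunc. pose proof (base_Int_part (z * 2^b)) as [H1 H2].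
  set (t := IZR (Int_part (z * 2 ^ b))) in *.
  assert (P: 0 < 2^b) by (apply pow_lt; lra).
  set (u := / 2 ^ b). assert (Hu : 2^b * u = 1) by (unfold u; field; lra).
  assert (Hu0 : 0 < u) by (unfold u; apply Rinv_0_lt_compat; lra).
  unfold Rdiv. fold u.
  assert (Hz : z = z * 2^b * u) by (rewrite Rmult_assoc, Hu; ring).
  split.
  - rewrite Hz at 1. apply Rmult_lt_reg_r with (2^b); auto.
    replace ((z * 2 ^ b * u - u) * 2 ^ b) with (z * 2^b - 1) by (unfold u; field; lra).
    replace (t * u * 2 ^ b) with t by (unfold u; field; lra). lra.
  - rewrite Hz. apply Rmult_le_compat_r; lra.
Qed.

Lemma pRZ_succ z : powerRZ 2 (z + 1) = 2 * powerRZ 2 z.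
Proof. rewrite powerRZ_add by lra. simpl. ring. Qed.

Lemma fp_sum_bound (bits: nat -> bool) (c: Z) n : forall a,
  fold_right Rplus 0 (map (fun k => if bits k then powerRZ 2 (c + Z.of_nat k) else 0) (seq a n))
  <= powerRZ 2 (c + Z.of_nat (a + n)) - powerRZ 2 (c + Z.of_nat a).
Proof.
  induction n; intros a.
  - simpl. rewrite Nat.add_0_r. lra.
  - simpl. specialize (IHn (S a)).
    replace (S a + n)%nat with (a + S n)%nat in IHn by lia.
    replace (c + Z.of_nat (S a))%Z with ((c + Z.of_nat a) + 1)%Z in IHn by lia.
    rewrite pRZ_succ in IHn.
    assert (0 < powerRZ 2 (c + Z.of_nat a)) by (apply powerRZ_lt; lra).
    destruct (bits a); lra.
Qed.

Lemma fp_lt n m w : fixed_point n m w -> w < 2 ^ m.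
Proof.
  intros [bits ->]. eapply Rle_lt_trans. apply fp_sum_bound.
  rewrite pow_powerRZ. simpl Nat.add.
  replace (Z.of_nat m - Z.of_nat n + Z.of_nat n)%Z with (Z.of_nat m) by lia.
  assert (0 < powerRZ 2 (Z.of_nat m - Z.of_nat n + Z.of_nat 0)) by (apply powerRZ_lt; lra).
  lra.
Qed.

Lemma e_step b w p i : 0 < w ->
  (1 - w * xhat b w p i)^2 <= 1 - w * xhat b w p (S i) <
  (1 - w * xhat b w p i)^2 + w * / 2 ^ b.
Proof.
  intros Hw. change (xhat b w p (S i)) with (trunc b (- w * (xhat b w p i)^2 + 2 * xhat b w p i)). set (x := xhat b w p i).
  pose proof (trunc_spec b (- w * x ^ 2 + 2 * x)) as [H1 H2].
  set (z := - w * x ^ 2 + 2 * x) in *. set (t := trunc b z) in *.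
  assert (Hz : 1 - w * z = (1 - w * x)^2) by (unfold z; ring).
  assert (w * t <= w * z) by (apply Rmult_le_compat_l; lra).
  assert (w * (z - / 2^b) < w * t) by (apply Rmult_lt_compat_l; lra).
  split; lra.
Qed.

Lemma e_crude b w p : 0 < w -> w * / 2^b <= 1/4 ->
  0 <= 1 - w * xhat b w p 0 <= 1/2 ->
  forall i, 0 <= 1 - w * xhat b w p i <= 1/2.
Proof.
  intros Hw Hd H0 i. induction i. auto.
  pose proof (e_step b w p i Hw). nra.
Qed.

Lemma e_fine b w p : 0 < w -> 0 <= w * / 2^b <= 2/9 ->
  0 <= 1 - w * xhat b w p 0 <= 1/2 ->
  forall i, 1 - w * xhat b w p i <= Rmax (2/3 * (3/4) ^ (Nat.pow 2 i)) (3 * (w * / 2^b)).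
Proof.
  intros Hw Hd H0 i.
  assert (Hc : forall j, 0 <= 1 - w * xhat b w p j <= 1/2).
  { apply e_crude; auto. lra. }
  induction i.
  - change (Nat.pow 2 0) with 1%nat. rewrite pow_1. unfold Rmax. destruct Rle_dec; lra.
  - pose proof (e_step b w p i Hw) as [_ Hs].
    set (d := w * / 2 ^ b) in *.
    set (e := 1 - w * xhat b w p i) in *.
    set (r := 2/3 * (3/4) ^ (Nat.pow 2 i)) in *.
    assert (Hr : 2/3 * (3/4) ^ (Nat.pow 2 (S i)) = 3/2 * r^2).
    { unfold r. simpl Nat.pow. rewrite Nat.add_0_r.
      replace (Nat.pow 2 i + Nat.pow 2 i)%nat with (Nat.pow 2 i * 2)%nat by lia.
      rewrite pow_mult. field. }
    rewrite Hr.
    assert (0 <= r) by (unfold r; assert (0 <= (3/4)^(Nat.pow 2 i)) by (apply pow_le; lra); lra).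
    assert (He : 0 <= e) by (apply Hc).
    assert (e^2 <= (Rmax r (3*d))^2).
    { apply pow_incr. lra. }
    revert H H1. unfold Rmax. destruct Rle_dec; destruct Rle_dec; intros; nra.
Qed.

Lemma f_step b x Sw Y : 0 < x -> x * Sw^2 <= 1 -> 1 <= Sw -> 0 < Y ->
  0 <= 1 - x * Y^2 <= 3/4 -> / 2^b <= 1/16 ->
  let Y' := trunc b (/2 * (3 * Y - x * Y^3)) in
  let f := 1 - x * Y^2 in
  0 < Y' /\ f^2 * (3 + f) / 4 <= 1 - x * Y'^2 <= f^2 * (3 + f) / 4 + 2 * / 2^b / Sw.
Proof.
  intros Hx HxS HS HY Hf He Y' f.
  set (y := /2 * (3 * Y - x * Y^3)) in *.
  set (eps := / 2^b) in *.
  assert (Heps : 0 < eps) by (unfold eps; apply Rinv_0_lt_compat, pow_lt; lra).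
  pose proof (trunc_spec b y) as [T1 T2]. fold eps in T1. fold Y' in T1, T2.
  assert (Hy : y = Y * (2 + f) / 2) by (unfold y, f; field).
  assert (Hxy : x * y^2 = 1 - f^2 * (3 + f) / 4) by (rewrite Hy; unfold f; field).
  assert (1 <= Sw^2) by nra. assert (Hx1 : x <= 1) by nra.
  assert (HY2 : 1/4 <= Y^2) by nra.
  assert (HY1 : 1/2 <= Y) by nra.
  assert (Hyy : Y <= y) by (rewrite Hy; unfold f in *; nra).
  assert (HY' : 0 < Y') by lra.
  assert (Hf0 : 0 <= f <= 3/4) by (unfold f; lra). assert (Hg0 : 0 <= f^2 * (3 + f) / 4) by nra.
  assert (f^2 * (3 + f) / 4 <= 1) by nra. assert (Hxy1 : 0 <= x * y^2 <= 1) by lra.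
  assert (HxyS : x * y * Sw <= 1).
  { assert (0 <= x * y * Sw) by (assert (0 < y) by lra; apply Rmult_le_pos; [apply Rmult_le_pos|]; lra).
    assert ((x*y*Sw)^2 = (x*Sw^2) * (x*y^2)) by ring. nra. }
  split; [exact HY'|]. split.
  - assert (Y'^2 <= y^2) by (apply pow_incr; lra). nra.
  - assert (x * (y^2 - Y'^2) <= 2 * eps / Sw).
    { replace (y^2 - Y'^2) with ((y - Y') * (y + Y')) by ring.
      assert (0 <= y - Y' <= eps) by lra.
      assert (y + Y' <= 2 * y) by lra.
      assert ((y-Y')*(y+Y') <= eps*(2*y)) by (apply Rmult_le_compat; lra).
      assert (x * ((y - Y') * (y + Y')) <= 2 * eps * (x * y)).
      { replace (2 * eps * (x * y)) with (x * (eps * (2 * y))) by ring. apply Rmult_le_compat_l; lra. }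
      assert (x * y <= / Sw).
      { apply (Rmult_le_reg_r Sw). lra. rewrite Rinv_l by lra. lra. }
      unfold Rdiv. nra. }
    lra.
Qed.

Lemma f_crude b x Sw y0 : 0 < x -> x * Sw^2 <= 1 -> 1 <= Sw -> 0 < y0 ->
  0 <= 1 - x * y0^2 <= 3/4 -> / 2^b <= 1/16 ->
  forall j, 0 < yhat b x y0 j /\ 0 <= 1 - x * (yhat b x y0 j)^2 <= 3/4.
Proof.
  intros Hx HxS HS Hy0 Hf He j. induction j. simpl. auto.
  destruct IHj as [HY HfY].
  change (yhat b x y0 (S j)) with (trunc b (/2 * (3 * yhat b x y0 j - x * (yhat b x y0 j)^3))).
  pose proof (f_step b x Sw (yhat b x y0 j) Hx HxS HS HY HfY He) as [A [B C]].
  split; auto. set (f := 1 - x * yhat b x y0 j ^ 2) in *.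
  assert (0 < / 2^b) by (apply Rinv_0_lt_compat, pow_lt; lra).
  assert (2 * / 2^b / Sw <= 1/8).
  { unfold Rdiv. assert (/ Sw <= 1) by (rewrite <- Rinv_1; apply Rinv_le_contravar; lra).
    assert (0 < / Sw) by (apply Rinv_0_lt_compat; lra). nra. }
  assert (f^2 <= 9/16) by nra.
  assert (f^2 * (3+f) <= 9/16 * (15/4)) by (apply Rmult_le_compat; nra).
  assert (f^2 * (3+f)/4 <= 135/256) by lra.
  assert (0 <= f^2 * (3+f)/4) by nra. split; lra.
Qed.

Lemma f_fine b x Sw y0 : 0 < x -> x * Sw^2 <= 1 -> 1 <= Sw -> 0 < y0 ->
  0 <= 1 - x * y0^2 <= 3/4 -> / 2^b <= 1/16 -> 2 * / 2^b / Sw <= 3/64 ->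
  forall j, 1 - x * (yhat b x y0 j)^2 <= Rmax ((3/4)^(Nat.pow 2 j)) (16 * (2 * / 2^b / Sw)).
Proof.
  intros Hx HxS HS Hy0 Hf He Hn j.
  pose proof (f_crude b x Sw y0 Hx HxS HS Hy0 Hf He) as Hc.
  assert (Hn0 : 0 <= 2 * / 2^b / Sw).
  { unfold Rdiv. assert (0 < / 2^b) by (apply Rinv_0_lt_compat, pow_lt; lra).
    assert (0 < / Sw) by (apply Rinv_0_lt_compat; lra). nra. }
  induction j.
  - change (Nat.pow 2 0) with 1%nat. rewrite pow_1. simpl. unfold Rmax. destruct Rle_dec; lra.
  - destruct (Hc j) as [HY HfY].
    change (yhat b x y0 (S j)) with (trunc b (/2 * (3 * yhat b x y0 j - x * (yhat b x y0 j)^3))).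
    pose proof (f_step b x Sw (yhat b x y0 j) Hx HxS HS HY HfY He) as [A [B C]].
    set (f := 1 - x * yhat b x y0 j ^ 2) in *.
    set (eta := 2 * / 2^b / Sw) in *.
    set (r := (3/4) ^ (Nat.pow 2 j)) in *.
    assert (Hr : (3/4) ^ (Nat.pow 2 (S j)) = r^2).
    { unfold r. simpl Nat.pow. rewrite Nat.add_0_r.
      replace (Nat.pow 2 j + Nat.pow 2 j)%nat with (Nat.pow 2 j * 2)%nat by lia.
      rewrite pow_mult. ring. }
    rewrite Hr.
    assert (0 <= r) by (unfold r; apply pow_le; lra).
    assert (r <= 3/4).
    { unfold r. rewrite <- (pow_1 (3/4)) at 2. apply pow_decr. lra.
      pose proof (Nat.pow_le_mono_r 2 0 j). simpl in H0. lia. }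
    assert (Hg : f^2 * (3+f)/4 <= 15/16 * f^2) by nra.
    assert (f^2 <= (Rmax r (16*eta))^2) by (apply pow_incr; lra).
    revert IHj H1. unfold Rmax. destruct Rle_dec; destruct Rle_dec; intros; nra.
Qed.

Lemma abs_final Sw Y e f M : 0 < Sw -> 0 < Y -> 0 <= e <= M -> 0 <= f <= M -> M <= 3/4 ->
  Y^2 * (1 - e) = Sw^2 * (1 - f) -> Rabs (Y - Sw) <= 2 * Sw * M.
Proof.
  intros HS HY He Hf HM Heq. apply Rabs_le. split.
  - destruct (Rle_dec 1 (2*M)). nra.
    assert (Y^2 >= (Sw * (1 - 2*M))^2).
    { assert (Y^2 >= Y^2 * (1-e)) by nra.
      assert (Sw^2 * (1-f) >= Sw^2 * (1 - M)) by nra.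
      assert ((1 - 2*M)^2 <= 1 - M) by nra.
      assert (Sw^2 * (1-M) >= Sw^2 * (1-2*M)^2) by nra.
      nra. }
    assert (0 <= Sw * (1 - 2*M)) by nra. nra.
  - assert (Y^2 <= (Sw * (1 + 2*M))^2).
    { assert ((1+2*M)^2*(1-e) >= 1) by nra.
      assert (Y^2 * (1-e) <= Sw^2) by nra.
      assert (Sw^2 <= Sw^2 * ((1+2*M)^2*(1-e))) by nra.
      assert (0 < 1 - e) by lra.
      replace ((Sw * (1 + 2 * M)) ^ 2) with (Sw^2 * (1+2*M)^2) by ring.
      nra. }
    assert (0 <= Sw * (1 + 2*M)) by nra. nra.
Qed.

Theorem theorem1 (n m : nat) (w : R) (b p q : nat) :
  fixed_point n m w ->
  1 < w ->
  (Nat.max (2 * m) 4 <= b)%nat ->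
  powerRZ 2 (Z.of_nat p - 1) <= w < 2 ^ p ->
  powerRZ 2 (- Z.of_nat q) <= xhat b w p (Nat.log2_up b)
    < powerRZ 2 (1 - Z.of_nat q) ->
  Rabs (yhat b (xhat b w p (Nat.log2_up b))
             (powerRZ 2 ((Z.of_nat q - 1) / 2)) (Nat.log2_up b) - sqrt w)
    <= (3 / 4) ^ (b - 2 * m) * (2 + INR b + ln (INR b) / ln 2).
Proof.
  intros Hfp Hw1 Hb Hp Hq.
  set (s := Nat.log2_up b) in *.
  pose proof (fp_lt n m w Hfp) as Hwm.
  assert (Hb4 : (4 <= b)%nat) by lia.
  assert (Hbm : (2 * m <= b)%nat) by lia.
  assert (P : 0 < 2^b) by (apply pow_lt; lra).
  set (eps := / 2^b).
  assert (Heps0 : 0 < eps) by (unfold eps; apply Rinv_0_lt_compat; lra).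
  assert (H2b : 2^b * eps = 1) by (unfold eps; field; lra).
  assert (P16 : 2^4 <= 2^b) by (apply Rle_pow; lra || lia).
  assert (Heps : eps <= 1/16).
  { unfold eps. replace (1/16) with (/ 2^4) by (simpl; field). apply Rinv_le_contravar; simpl; lra. }
  assert (Hw2 : w^2 < 2^b).
  { assert (w^2 < (2^m)^2) by nra.
    rewrite <- pow_mult in H. rewrite Nat.mul_comm in H.
    assert (2^(2*m) <= 2^b) by (apply Rle_pow; lra || lia). lra. }
  set (delta := w * eps).
  assert (Hd0 : 0 < delta) by (unfold delta; nra).
  assert (Hd2 : delta^2 < eps).
  { unfold delta. replace ((w*eps)^2) with (w^2 * eps * eps) by ring.
    assert (w^2 * eps < 2^b * eps) by (apply Rmult_lt_compat_r; lra). nra. }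
  assert (Hd14 : delta <= 1/4) by nra.
                    
  assert (He0 : 0 <= 1 - w * xhat b w p 0 <= 1/2).
  { change (xhat b w p 0) with (/ 2^p).
    assert (Pp : 0 < 2^p) by (apply pow_lt; lra).
    destruct Hp as [Hp1 Hp2].
    replace (Z.of_nat p - 1)%Z with (Z.of_nat p + (-1))%Z in Hp1 by lia.
    rewrite powerRZ_add, <- pow_powerRZ in Hp1 by lra.
    simpl powerRZ in Hp1.
    assert (w * / 2^p < 1) by (apply (Rmult_lt_reg_r (2^p)); [lra|]; field_simplify; lra).
    assert (1/2 <= w * / 2^p) by (apply (Rmult_le_reg_r (2^p)); [lra|]; field_simplify; lra).
    lra. }
  assert (Hec := e_crude b w p ltac:(lra) ltac:(fold eps; fold delta; lra) He0).
  set (x := xhat b w p s) in *.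
  set (e := 1 - w * x).
  assert (He : 0 <= e <= 1/2) by apply Hec.
  set (Sw := sqrt w).
  assert (HSw2 : Sw^2 = w) by (apply pow2_sqrt; lra).
  assert (HSw1 : 1 <= Sw).
  { unfold Sw. rewrite <- sqrt_1. apply sqrt_le_1_alt. lra. }
  assert (Hx0 : 0 < x) by (unfold e in He; nra).
  assert (HxS : x * Sw^2 = 1 - e) by (rewrite HSw2; unfold e; ring).
  set (y0 := powerRZ 2 ((Z.of_nat q - 1) / 2)).
  assert (Hy0 : 0 < y0) by (unfold y0; apply powerRZ_lt; lra).
  assert (Hf0 : 0 <= 1 - x * y0^2 <= 3/4).
  { set (k := ((Z.of_nat q - 1) / 2)%Z) in *.
    assert (Hk : (Z.of_nat q - 1 = 2 * k + (Z.of_nat q - 1) mod 2)%Z) by (unfold k; apply Z_div_mod_eq_full).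
    pose proof (Z.mod_pos_bound (Z.of_nat q - 1) 2 ltac:(lia)).
    assert (Hy2 : y0^2 = powerRZ 2 (k + k)) by (unfold y0; rewrite powerRZ_add by lra; ring).
    rewrite Hy2. destruct Hq as [Hq1 Hq2].
    assert (PA : 0 < powerRZ 2 (k+k)) by (apply powerRZ_lt; lra).
    assert (A1 : powerRZ 2 (- Z.of_nat q) * powerRZ 2 (k+k) <= x * powerRZ 2 (k+k)) by (apply Rmult_le_compat_r; lra).
    assert (A2 : x * powerRZ 2 (k+k) < powerRZ 2 (1 - Z.of_nat q) * powerRZ 2 (k+k)) by (apply Rmult_lt_compat_r; lra).
    rewrite <- powerRZ_add in A1, A2 by lra.
    destruct (Z.eq_dec ((Z.of_nat q - 1) mod 2) 0) as [E|E].
    - replace (- Z.of_nat q + (k + k))%Z with (-1)%Z in A1 by lia.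
      replace (1 - Z.of_nat q + (k + k))%Z with 0%Z in A2 by lia.
      simpl in A1, A2. lra.
    - replace (- Z.of_nat q + (k + k))%Z with (-2)%Z in A1 by lia.
      replace (1 - Z.of_nat q + (k + k))%Z with (-1)%Z in A2 by lia.
      simpl in A1, A2. lra. }
  assert (HxS1 : x * Sw^2 <= 1) by lra.
  assert (Hfc := f_crude b x Sw y0 Hx0 HxS1 HSw1 Hy0 Hf0 Heps).
  set (Y := yhat b x y0 s).
  destruct (Hfc s) as [HY Hf]. fold Y in HY, Hf.
  set (f := 1 - x * Y^2) in *.
  assert (Hrel : Y^2 * (1 - e) = Sw^2 * (1 - f)) by (rewrite <- HxS; unfold f; ring).
  assert (HSw0 : 0 < Sw) by lra.
  assert (HL : 0 <= ln (INR b) / ln 2).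
  { assert (0 < ln 2) by (rewrite <- ln_1; apply ln_increasing; lra).
    assert (4 <= INR b) by (replace 4 with (INR 4) by (simpl; ring); apply le_INR; lia).
    assert (0 < ln (INR b)) by (rewrite <- ln_1; apply ln_increasing; lra).
    unfold Rdiv. apply Rmult_le_pos. lra. left; apply Rinv_0_lt_compat; lra. }
  set (L := ln (INR b) / ln 2) in *.
  set (K := (b - 2*m)%nat) in *.
  assert (HK0 : 0 < (3/4)^K) by (apply pow_lt; lra).
  destruct (le_lt_dec 6 b) as [Hb6 | Hb6].
  2:{ assert (Habs := abs_final Sw Y e f (3/4) HSw0 HY ltac:(lra) ltac:(lra) ltac:(lra) Hrel).
      assert (Hm : (m = 1 \/ m = 2)%nat).
      { destruct m as [|[|[|m']]]; try lia. simpl in Hwm. lra. }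
      assert (Hbb : (b = 4 \/ b = 5)%nat) by lia.
      destruct Hm as [-> | ->]; destruct Hbb as [-> | ->]; simpl in Hwm, K.
      all: unfold K; assert (Sw^2 < 2^2 \/ Sw^2 < 2) by (simpl in *; lra).
      all: assert (Sw <= 2) by nra.
      all: unfold K in HK0; simpl pow in *; simpl INR.
      all: try (assert (Sw <= 3/2) by nra).
      all: nra. }
                 
  assert (P64 : 2^6 <= 2^b) by (apply Rle_pow; lra || lia).
  assert (Heps64 : eps <= 1/64).
  { unfold eps. replace (1/64) with (/ 2^6) by (simpl; field). apply Rinv_le_contravar; simpl; lra. }
  assert (Hd8 : delta <= 1/8) by nra.
  set (eta := 2 * eps / Sw).
  assert (Heta0 : 0 <= eta).
  { unfold eta, Rdiv. assert (0 < / Sw) by (apply Rinv_0_lt_compat; lra). nra. }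
  assert (Heta : eta <= 3/64).
  { unfold eta, Rdiv. assert (/ Sw <= 1) by (rewrite <- Rinv_1; apply Rinv_le_contravar; lra).
    assert (0 < / Sw) by (apply Rinv_0_lt_compat; lra). nra. }
  assert (Hef := e_fine b w p ltac:(lra) ltac:(fold eps; fold delta; lra) He0 s).
  fold x eps delta e in Hef.
  assert (Hff := f_fine b x Sw y0 Hx0 HxS1 HSw1 Hy0 Hf0 Heps ltac:(fold eps eta; lra) s).
  fold eps eta Y f in Hff.
  set (r := (3/4) ^ (Nat.pow 2 s)) in *.
  assert (Hr0 : 0 <= r) by (unfold r; apply pow_le; lra).
  assert (Hrb : r <= (3/4)^b).
  { unfold r. apply pow_decr. lra. unfold s. apply Nat.log2_log2_up_spec. lia. }
  assert (HbK : (b = K + 2 * m)%nat) by (unfold K; lia).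
  assert (H3b : (3/4)^b = (3/4)^K * (9/16)^m).
  { rewrite HbK, pow_add, pow_mult. replace ((3/4)^2) with (9/16) by (simpl; field). reflexivity. }
  assert (H2bK : 2^b = 2^K * 2^(2*m)) by (rewrite HbK, pow_add; ring).
                 
  assert (B1 : 2 * Sw * r <= 2 * (3/4)^K).
  { assert (Z1 : Sw * (9/16)^m <= 1).
    { assert (0 <= Sw * (9/16)^m) by (assert (0 < (9/16)^m) by (apply pow_lt; lra); nra).
      assert ((Sw * (9/16)^m)^2 = w * (81/256)^m).
      { rewrite Rpow_mult_distr, HSw2, <- pow_mult, Nat.mul_comm, pow_mult. f_equal. f_equal. field. }
      assert (w * (81/256)^m <= 2^m * (81/256)^m).
      { apply Rmult_le_compat_r. apply pow_le; lra. lra. }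
      rewrite <- Rpow_mult_distr in H1.
      assert ((2 * (81/256))^m <= 1) by (apply pow_le1; lra).
      nra. }
    assert (Sw * r <= Sw * ((3/4)^K * (9/16)^m)) by (rewrite <- H3b; apply Rmult_le_compat_l; lra).
    nra. }
                  
  assert (B2 : 2 * Sw * (3 * delta) <= 6 * (3/4)^K).
  { assert (Sw <= w) by nra.
    assert (w^2 < (2^m)^2) by nra.
    rewrite <- pow_mult, Nat.mul_comm in H0.
    assert (Sw * delta <= w^2 * eps) by (unfold delta; replace (w^2*eps) with (w*(w*eps)) by ring; apply Rmult_le_compat_r; nra).
    assert (w^2 * eps <= / 2^K).
    { unfold eps. rewrite H2bK. assert (0 < 2^K) by (apply pow_lt; lra).
      assert (0 < 2^(2*m)) by (apply pow_lt; lra).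
      rewrite Rinv_mult. 
      assert (w^2 * / 2^(2*m) <= 1).
      { apply (Rmult_le_reg_r (2^(2*m))). lra. rewrite Rmult_assoc, Rinv_l by lra. lra. }
      assert (0 < / 2^K) by (apply Rinv_0_lt_compat; lra). nra. }
    assert (/ 2^K <= (3/4)^K).
    { assert (H4 : 1 <= (3/4 * 2)^K) by (apply pow_R1_Rle; lra).
      rewrite Rpow_mult_distr in H4. assert (0 < 2^K) by (apply pow_lt; lra).
      apply (Rmult_le_reg_r (2^K)). lra. rewrite Rinv_l by lra. lra. }
    lra. }
                   
  assert (B3 : 2 * Sw * (16 * eta) <= 8 * (3/4)^K).
  { replace (2 * Sw * (16 * eta)) with (64 * eps) by (unfold eta; field; lra).
    assert ((3/4)^b <= (3/4)^K) by (apply pow_decr; [lra | unfold K; lia]).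
    assert (8 <= (3/2)^b).
    { assert ((3/2)^6 <= (3/2)^b) by (apply Rle_pow; lra || lia). simpl in H0. lra. }
    assert (8 * eps <= (3/4)^b).
    { replace ((3/4)^b) with ((3/2)^b * eps).
      2:{ unfold eps. replace (3/2) with (3/4 * 2) by field. rewrite Rpow_mult_distr. field. lra. }
      nra. }
    lra. }
  set (M := Rmax r (Rmax (3 * delta) (16 * eta))).
  assert (HM1 : Rmax (2 / 3 * r) (3 * delta) <= M).
  { unfold M, Rmax. repeat destruct Rle_dec; lra. }
  assert (HM2 : Rmax r (16 * eta) <= M).
  { unfold M, Rmax. repeat destruct Rle_dec; lra. }
  assert (Hr34 : r <= 3/4).
  { assert ((3/4)^b <= (3/4)^1) by (apply pow_decr; [lra | lia]). simpl in H. lra. }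
  assert (HM3 : M <= 3/4) by (unfold M, Rmax; repeat destruct Rle_dec; lra).
  assert (Habs := abs_final Sw Y e f M HSw0 HY ltac:(lra) ltac:(lra) HM3 Hrel).
  assert (HbR : 6 <= INR b) by (replace 6 with (INR 6) by (simpl; ring); apply le_INR; lia).
  assert (2 * Sw * M <= (3/4)^K * (2 + INR b + L)).
  { unfold M, Rmax. repeat destruct Rle_dec; nra. }
  lra.
Qed.
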